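(* Fix an integer $m>1$ and consider the $(m,m)$ algorithm on the complete graph on $N$ nodes. Let $X(t)$ be the number of nodes in state $1$ at time $t$. Then for every $i\in\{0,1,\ldots,N\}$, $$\mathbb{P}(X(\infty)=N\mid X(0)=i)=\frac{\sum_{k=0}^{i-1}\binom{N-1}{k}^{m-1}}{\sum_{k=0}^{N-1}\binom{N-1}{k}^{m-1}}$$ (an empty sum being $0$). Further, for every $\alpha\in(0,1/2)$ there is a constant $c>0$ not depending on $N$ such that $$h_N(\alpha)\le c\exp\Bigl(-(N-1)(m-1)D\bigl(\alpha;\tfrac12\bigr)\Bigr),$$ where $D(p;\tfrac12)=\log 2-H(p)$ with $H(p)=-p\log p-(1-p)\log(1-p)$, i.e. $D(p;\tfrac12)$ is the Kullback–Leibler divergence of the Bernoulli$(p)$ distribution from the Bernoulli$(1/2)$ distribution. Moreover, the two sides of this inequality are logarithmically equivalent as $N\to\infty$, i.e. $\lim_{N\to\infty}\frac1N\log h_N(\alpha)=-(m-1)D(\alpha;\tfrac12)$.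
   Context: The $(m,d)$ algorithm (integers $1\le d\le m$) on the complete graph on $N$ nodes: each node has a state in $\{0,1\}$ and an independent unit-rate exponential clock (Poisson process of rate 1), independent of all states. At each tick of its clock, a node samples $m$ nodes uniformly at random from all $N$ nodes, with replacement, and observes their current states; if at least $d$ of the sampled nodes have a state different from its own, it switches its state, otherwise it keeps it. The number $X(t)$ of nodes in state 1 is then a continuous-time Markov chain on $\{0,\ldots,N\}$ with rates $q_{n,n+1}=(N-n)\mathbb{P}(\mathrm{Bin}(m,n/N)\ge d)$ and $q_{n,n-1}=n\,\mathbb{P}(\mathrm{Bin}(m,(N-n)/N)\ge d)$; states $0$ and $N$ are absorbing, and $X(\infty)$ denotes the absorbing state eventually reached. The $(m,m)$ algorithm is the case $d=m$. For $\alpha=i/N$, $i\in\{0,\ldots,N\}$, define $h_N(\alpha)=\mathbb{P}(X(\infty)=N\mid X(0)=\lfloor\alpha N\rfloor)$, and for general $\alpha\in[0,1]$ define $h_N(\alpha)=(N\alpha-\lfloor N\alpha\rfloor)h_N(\lceil\alpha N\rceil/N)+(\lceil N\alpha\rceil-N\alpha)h_N(\lfloor\alpha N\rfloor/N)$ (linear interpolation). *)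

(* Defs.v *)
From Stdlib Require Import Reals Binomial.
From Coquelicot Require Import Coquelicot.
Open Scope R_scope.

Fixpoint sumR (f : nat -> R) (n : nat) : R :=
  match n with
  | O => 0
  | S n' => sumR f n' + f n'
  end.

Definition binom_tail (m d : nat) (p : R) : R :=
  sumR (fun j => if Nat.leb d j
                 then Binomial.C m j * p ^ j * (1 - p) ^ (m - j) else 0) (S m).

(* Transition rates of X(t) for the (m,d) algorithm on K_N. *)
Definition q_up (N m d n : nat) : R :=
  INR (N - n) * binom_tail m d (INR n / INR N).
Definition q_down (N m d n : nat) : R :=
  INR n * binom_tail m d (INR (N - n) / INR N).

(* Embedded jump chain of X: from an absorbing state (0 or N) it stays put;
   otherwise it jumps up / down with probabilities proportional to the rates
   (if the total rate were 0 the state would be absorbing; this never happens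
   for 0 < n < N). *)
Definition p_up (N m d n : nat) : R :=
  if Rlt_dec 0 (q_up N m d n + q_down N m d n)
  then q_up N m d n / (q_up N m d n + q_down N m d n) else 0.
Definition p_down (N m d n : nat) : R :=
  if Rlt_dec 0 (q_up N m d n + q_down N m d n)
  then q_down N m d n / (q_up N m d n + q_down N m d n) else 0.
Definition p_stay (N m d n : nat) : R :=
  if Rlt_dec 0 (q_up N m d n + q_down N m d n) then 0 else 1.

(* reach N m d k n = P(jump chain is at N after k jumps | start at n),
   i.e. the (n, N) entry of the k-th power of the transition matrix. *)
Fixpoint reach (N m d k n : nat) : R :=
  match k with
  | O => if Nat.eqb n N then 1 else 0
  | S k' =>
      if Nat.eqb n 0 then reach N m d k' 0
      else if Nat.eqb n N then reach N m d k' N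
      else p_up N m d n * reach N m d k' (S n)
           + p_down N m d n * reach N m d k' (n - 1)
           + p_stay N m d n * reach N m d k' n
  end.

(* P(X(infinity) = N | X(0) = i): since N is absorbing, the event
   {X(infinity) = N} is the increasing union over k of {jump chain at N after
   k jumps}, so its probability is the limit of reach _ _ _ k i. *)
Definition absorb_prob (N m d i : nat) : R :=
  real (Lim_seq (fun k => reach N m d k i)).

(* h_N(alpha), with linear interpolation between the grid points i/N. *)
Definition hN (N m d : nat) (alpha : R) : R :=
  let x := INR N * alpha in
  let f := Z.to_nat (Int_part x) in
  if Req_EM_T x (INR f) then absorb_prob N m d f
  else (x - INR f) * absorb_prob N m d (S f)
       + (INR (S f) - x) * absorb_prob N m d f.

Definition Hent (p : R) : R := - p * ln p - (1 - p) * ln (1 - p).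
Definition KL_half (p : R) : R := ln 2 - Hent p.

(* Main.v *)
Require Import Defs.
From Stdlib Require Import Reals Binomial Lra Lia Arith ZArith.
From Coquelicot Require Import Coquelicot.
Open Scope R_scope.
Notation Cb := Binomial.C.

Lemma sumR_ext f g n : (forall k, (k < n)%nat -> f k = g k) -> sumR f n = sumR g n.
Proof. induction n; simpl; intros H; [reflexivity|]. rewrite IHn by (intros; apply H; lia). rewrite H by lia. reflexivity. Qed.

Lemma sumR_nonneg f n : (forall k, (k < n)%nat -> 0 <= f k) -> 0 <= sumR f n.
Proof. induction n; simpl; intros H; [lra|]. pose proof (H n ltac:(lia)). pose proof (IHn ltac:(intros; apply H; lia)). lra. Qed.

Lemma sumR_le f g n : (forall k, (k < n)%nat -> f k <= g k) -> sumR f n <= sumR g n.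
Proof. induction n; simpl; intros H; [lra|]. pose proof (H n ltac:(lia)). pose proof (IHn ltac:(intros; apply H; lia)). lra. Qed.

Lemma sumR_mono f a b : (forall k, 0 <= f k) -> (a <= b)%nat -> sumR f a <= sumR f b.
Proof. intros Hf H. induction H; [lra|]. simpl. pose proof (Hf m). lra. Qed.

Lemma sumR_term f n k : (forall k, 0 <= f k) -> (k < n)%nat -> f k <= sumR f n.
Proof. intros Hf H. induction H; simpl. - pose proof (sumR_nonneg f k ltac:(intros; apply Hf)). lra.
 - pose proof (Hf m). lra. Qed.

Lemma C_pos n k : (k <= n)%nat -> 0 < Cb n k.
Proof. intros. unfold Binomial.C. apply Rdiv_lt_0_compat; [apply lt_0_INR, lt_O_fact|].
 apply Rmult_lt_0_compat; apply lt_0_INR, lt_O_fact. Qed.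

Lemma C_ratio n k : (k < n)%nat -> Cb n (S k) * INR (S k) = Cb n k * INR (n - k).
Proof. intros H. rewrite pascal_step3 by lia. field. apply not_0_INR. lia. Qed.

Lemma C_nn n : Cb n n = 1.
Proof. unfold Binomial.C. rewrite Nat.sub_diag. simpl. field. apply not_0_INR. apply fact_neq_0. Qed.

Lemma binom_tail_mm m p : binom_tail m m p = p ^ m.
Proof. unfold binom_tail. simpl.
 rewrite (sumR_ext _ (fun _ => 0)).
 - assert (E: forall n, sumR (fun _ => 0) n = 0) by (induction n; simpl; [lra| rewrite IHn; lra]).
   rewrite E. rewrite Nat.leb_refl, C_nn, Nat.sub_diag. simpl. ring.
 - intros k Hk. destruct (Nat.leb m k) eqn:E; [apply Nat.leb_le in E; lia | reflexivity].
Qed.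

Definition wt (N m k : nat) : R := Cb (N - 1) k ^ (m - 1).
Definition SS N m i := sumR (wt N m) i.
Definition hh N m i := SS N m i / SS N m N.

Lemma wt_nonneg N m k : 0 <= wt N m k.
Proof. unfold wt. destruct (le_lt_dec k (N-1)).
 - apply pow_le. left. apply C_pos. lia.
 - unfold Binomial.C. apply pow_le. apply Rmult_le_pos; [apply pos_INR|]. left. apply Rinv_0_lt_compat.
   apply Rmult_lt_0_compat; apply lt_0_INR, lt_O_fact. Qed.

Lemma wt_pos N m k : (k < N)%nat -> 0 < wt N m k.
Proof. intros. unfold wt. apply pow_lt. apply C_pos. lia. Qed.

Lemma SS_pos N m : (1 <= N)%nat -> 0 < SS N m N.
Proof. intros. unfold SS. eapply Rlt_le_trans; [apply (wt_pos N m 0); lia|].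
 apply sumR_term; [apply wt_nonneg| lia]. Qed.

Lemma hh_range N m i : (1 <= N)%nat -> (i <= N)%nat -> 0 <= hh N m i <= 1.
Proof. intros. pose proof (SS_pos N m H). unfold hh. split.
 - apply Rdiv_le_0_compat; [apply sumR_nonneg; intros; apply wt_nonneg| lra].
 - assert (SS N m i <= SS N m N) by (apply sumR_mono; [apply wt_nonneg| lia]).
    apply Rmult_le_reg_r with (SS N m N); [lra|]. unfold Rdiv. rewrite Rmult_assoc, Rinv_l; lra. Qed.

Lemma hh_mono N m i j : (1 <= N)%nat -> (i <= j)%nat -> hh N m i <= hh N m j.
Proof. intros. pose proof (SS_pos N m H). unfold hh. apply Rmult_le_compat_r.
 - left; apply Rinv_0_lt_compat; lra.
 - apply sumR_mono; [apply wt_nonneg| lia]. Qed.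

Lemma qup_eq N m n : q_up N m m n = INR (N - n) * (INR n / INR N) ^ m.
Proof. unfold q_up. rewrite binom_tail_mm. reflexivity. Qed.
Lemma qdown_eq N m n : q_down N m m n = INR n * (INR (N - n) / INR N) ^ m.
Proof. unfold q_down. rewrite binom_tail_mm. reflexivity. Qed.

Lemma q_pos N m n : (0 < n < N)%nat -> 0 < q_up N m m n /\ 0 < q_down N m m n.
Proof. intros H. rewrite qup_eq, qdown_eq.
 assert (0 < INR n) by (apply lt_0_INR; lia). assert (0 < INR (N - n)) by (apply lt_0_INR; lia).
 assert (0 < INR N) by (apply lt_0_INR; lia).
 split; apply Rmult_lt_0_compat; auto; apply pow_lt; apply Rdiv_lt_0_compat; auto. Qed.

Lemma balance N m n : (1 < m)%nat -> (0 < n < N)%nat ->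
  q_up N m m n * wt N m n = q_down N m m n * wt N m (n - 1).
Proof. intros Hm H. rewrite qup_eq, qdown_eq. unfold wt.
 destruct n as [|n']; [lia|]. replace (S n' - 1)%nat with n' by lia.
 pose proof (C_ratio (N - 1) n' ltac:(lia)) as HC. replace (N - 1 - n')%nat with (N - S n')%nat in HC by lia.
 set (A := Cb (N-1) (S n')) in *. set (B := Cb (N-1) n') in *.
 set (x := INR (S n')) in *. set (y := INR (N - S n')) in *. set (z := INR N).
 destruct m as [|k]; [lia|]. replace (S k - 1)%nat with k by lia.
 assert (z <> 0) by (unfold z; apply not_0_INR; lia).
 assert (E1: (x / z) ^ k * A ^ k = (A * x / z) ^ k) by (rewrite <- Rpow_mult_distr; f_equal; field; auto).
 assert (E2: (y / z) ^ k * B ^ k = (B * y / z) ^ k) by (rewrite <- Rpow_mult_distr; f_equal; field; auto).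
 simpl. replace (y * (x / z * (x / z) ^ k) * A ^ k) with (y * (x/z) * ((x / z) ^ k * A ^ k)) by ring.
 replace (x * (y / z * (y / z) ^ k) * B ^ k) with (x * (y/z) * ((y / z) ^ k * B ^ k)) by ring.
 rewrite E1, E2, HC. field. auto. Qed.

Lemma p_vals N m n : (0 < n < N)%nat ->
  p_up N m m n = q_up N m m n / (q_up N m m n + q_down N m m n) /\
  p_down N m m n = q_down N m m n / (q_up N m m n + q_down N m m n) /\
  p_stay N m m n = 0.
Proof. intros H. destruct (q_pos N m n H). unfold p_up, p_down, p_stay.
 destruct (Rlt_dec 0 (q_up N m m n + q_down N m m n)); [|lra]. auto. Qed.

Lemma harm_alg a b s u v T : 0 < a -> 0 < b -> 0 < T -> a * v = b * u ->
  a / (a + b) * ((s + u + v) / T) + b / (a + b) * (s / T) = (s + u) / T.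
Proof. intros. assert (E: a * (s + u + v) + b * s = (a + b) * (s + u)).
 { replace (a * (s + u + v)) with (a * (s + u) + a * v) by ring. rewrite H2. ring. }
 replace (a / (a + b) * ((s + u + v) / T) + b / (a + b) * (s / T)) with
   ((a * (s + u + v) + b * s) / ((a + b) * T)) by (field; lra).
 rewrite E. field. lra. Qed.

Lemma hh_harm N m n : (1 < m)%nat -> (0 < n < N)%nat ->
  p_up N m m n * hh N m (S n) + p_down N m m n * hh N m (n - 1) = hh N m n.
Proof. intros Hm H. destruct (p_vals N m n H) as [E1 [E2 _]]. rewrite E1, E2.
 pose proof (balance N m n Hm H). destruct (q_pos N m n H).
 pose proof (SS_pos N m ltac:(lia)). unfold hh, SS in *.
 destruct n as [|n']; [lia|]. replace (S n' - 1)%nat with n' in * by lia.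
 simpl sumR. apply harm_alg; auto. Qed.

Lemma pow_le_one x n : 0 <= x <= 1 -> x ^ n <= 1.
Proof. intros H. induction n; simpl; [lra|]. pose proof (pow_le x n ltac:(lra)). nra. Qed.

Section Conv.
Variables (N m : nat).
Hypothesis HN : (1 <= N)%nat.
Hypothesis Hm : (1 < m)%nat.

Definition err k n := hh N m n - reach N m m k n.

Lemma reach_0 k : reach N m m k 0 = 0.
Proof. induction k; simpl. - destruct N; [lia|reflexivity]. - exact IHk. Qed.

Lemma reach_N k : reach N m m k N = 1.
Proof. induction k; simpl. - rewrite Nat.eqb_refl; reflexivity.
 - destruct (Nat.eqb N 0) eqn:E; [apply Nat.eqb_eq in E; lia|]. rewrite Nat.eqb_refl. exact IHk. Qed.

Lemma hh_0 : hh N m 0 = 0.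
Proof. unfold hh, SS. simpl. unfold Rdiv. ring. Qed.
Lemma hh_N : hh N m N = 1.
Proof. unfold hh. pose proof (SS_pos N m HN). field. lra. Qed.

Lemma err_0 k : err k 0 = 0.
Proof. unfold err. rewrite reach_0, hh_0. ring. Qed.
Lemma err_N k : err k N = 0.
Proof. unfold err. rewrite reach_N, hh_N. ring. Qed.

Lemma pud n : (0 < n < N)%nat -> 0 < p_up N m m n /\ 0 < p_down N m m n /\ p_up N m m n + p_down N m m n = 1.
Proof. intros H. destruct (p_vals N m n H) as [E1 [E2 _]]. destruct (q_pos N m n H). rewrite E1, E2.
 split; [|split]. - apply Rdiv_lt_0_compat; lra. - apply Rdiv_lt_0_compat; lra. - field. lra. Qed.

Lemma err_step k n : (0 < n < N)%nat ->
  err (S k) n = p_up N m m n * err k (S n) + p_down N m m n * err k (n - 1).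
Proof. intros H. unfold err. rewrite <- (hh_harm N m n Hm H) at 1.
 destruct (p_vals N m n H) as [_ [_ E3]]. simpl.
 destruct (Nat.eqb n 0) eqn:E; [apply Nat.eqb_eq in E; lia|].
 destruct (Nat.eqb n N) eqn:E'; [apply Nat.eqb_eq in E'; lia|]. rewrite E3. ring. Qed.

Lemma pi_exists : exists p, 0 < p <= 1 /\ forall n, (0 < n < N)%nat -> p <= p_up N m m n.
Proof.
 assert (forall K, exists p, 0 < p <= 1 /\ forall n, (n < K)%nat -> (0 < n < N)%nat -> p <= p_up N m m n).
 { induction K. - exists 1. split; [lra|]. intros; lia.
   - destruct IHK as [p [Hp H]]. destruct (lt_dec 0 K); [destruct (lt_dec K N)|].
     + destruct (pud K ltac:(lia)) as [A [B C]]. exists (Rmin p (p_up N m m K)). split.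
       * split; [apply Rmin_glb_lt; lra| pose proof (Rmin_l p (p_up N m m K)); lra].
       * intros n Hn Hn'. destruct (Nat.eq_dec n K). subst; apply Rmin_r.
         eapply Rle_trans; [apply Rmin_l|]. apply H; lia.
     + exists p. split; auto. intros; apply H; lia.
     + exists p. split; auto. intros; apply H; lia. }
 destruct (H N) as [p [Hp H']]. exists p. split; auto. intros; apply H'; lia. Qed.

Lemma bound_inv k M : (forall n, (n <= N)%nat -> Rabs (err k n) <= M) ->
  forall n, (n <= N)%nat -> Rabs (err (S k) n) <= M.
Proof. intros H n Hn. assert (M0: 0 <= M) by (pose proof (H 0%nat ltac:(lia)); pose proof (Rabs_pos (err k 0)); lra).
 destruct (Nat.eq_dec n 0). { subst. rewrite err_0, Rabs_R0. auto. }
 destruct (Nat.eq_dec n N). { subst. rewrite err_N, Rabs_R0. auto. }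
 rewrite err_step by lia. destruct (pud n ltac:(lia)) as [A [B C]].
 eapply Rle_trans; [apply Rabs_triang|]. rewrite !Rabs_mult, (Rabs_right (p_up _ _ _ _)), (Rabs_right (p_down _ _ _ _)) by lra.
 pose proof (H (S n) ltac:(lia)). pose proof (H (n-1)%nat ltac:(lia)).
 apply Rle_trans with (p_up N m m n * M + p_down N m m n * M); [|nra].
 apply Rplus_le_compat; apply Rmult_le_compat_l; lra. Qed.

Lemma bound_iter k M r : (forall n, (n <= N)%nat -> Rabs (err k n) <= M) ->
  forall n, (n <= N)%nat -> Rabs (err (r + k) n) <= M.
Proof. intros H. induction r; simpl; auto. apply bound_inv. auto. Qed.

Lemma contract p k M : 0 < p <= 1 -> (forall n, (0 < n < N)%nat -> p <= p_up N m m n) ->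
  (forall n, (n <= N)%nat -> Rabs (err k n) <= M) ->
  forall j n, (n <= N)%nat -> (N <= n + j)%nat -> Rabs (err (j + k) n) <= M * (1 - p ^ (N - n)).
Proof. intros Hp Hpu H. assert (M0: 0 <= M) by (pose proof (H 0%nat ltac:(lia)); pose proof (Rabs_pos (err k 0)); lra).
 induction j; intros n Hn Hj.
 - assert (n = N) by lia. subst. simpl. rewrite err_N, Rabs_R0, Nat.sub_diag. simpl. lra.
 - destruct (Nat.eq_dec n 0). { subst. rewrite err_0, Rabs_R0. apply Rmult_le_pos; auto.
     pose proof (pow_le p (N - 0) ltac:(lra)). assert (p ^ (N-0) <= 1) by (apply pow_le_one; lra). lra. }
   destruct (Nat.eq_dec n N). { subst. rewrite err_N, Rabs_R0, Nat.sub_diag. simpl. lra. }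
   simpl. rewrite err_step by lia. destruct (pud n ltac:(lia)) as [A [B C]].
   eapply Rle_trans; [apply Rabs_triang|]. rewrite !Rabs_mult, (Rabs_right (p_up _ _ _ _)), (Rabs_right (p_down _ _ _ _)) by lra.
   pose proof (IHj (S n) ltac:(lia) ltac:(lia)).
   pose proof (bound_iter k M j H (n-1)%nat ltac:(lia)).
   pose proof (Hpu n ltac:(lia)).
   replace (N - n)%nat with (S (N - S n)) by lia. simpl.
   set (t := p ^ (N - S n)) in *. assert (0 <= t) by (apply pow_le; lra).
   apply Rle_trans with (p_up N m m n * (M * (1 - t)) + p_down N m m n * M).
   + apply Rplus_le_compat; apply Rmult_le_compat_l; lra.
   + assert (p * t * M <= p_up N m m n * t * M) by (apply Rmult_le_compat_r; auto; apply Rmult_le_compat_r; auto). nra.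
Qed.

Lemma geom p : 0 < p <= 1 -> (forall n, (0 < n < N)%nat -> p <= p_up N m m n) ->
  forall q r n, (n <= N)%nat -> Rabs (err (q * N + r) n) <= (1 - p ^ N) ^ q.
Proof. intros Hp Hpu. induction q; intros r n Hn.
 - simpl. rewrite <- (Nat.add_0_r r). apply (bound_iter 0 1 r); auto. intros n' Hn'. unfold err. simpl.
   pose proof (hh_range N m n' HN Hn'). destruct (Nat.eqb n' N); rewrite Rabs_le_between; lra.
 - replace (S q * N + r)%nat with (N + (q * N + r))%nat by lia.
   pose proof (contract p (q * N + r) _ Hp Hpu (fun n H => IHq r n H) N n Hn ltac:(lia)).
   eapply Rle_trans; [exact H|]. simpl. rewrite (Rmult_comm (1 - p ^ N)). apply Rmult_le_compat_l.
   + apply pow_le. assert (p ^ N <= 1) by (apply pow_le_one; lra). lra.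
   + assert (p ^ N <= p ^ (N - n)).
     { replace N with ((N - n) + n)%nat at 1 by lia. rewrite pow_add.
       pose proof (pow_le p (N-n) ltac:(lra)). assert (p ^ n <= 1) by (apply pow_le_one; lra). nra. }
     lra.
Qed.

Lemma reach_lim i : (i <= N)%nat -> is_lim_seq (fun k => reach N m m k i) (hh N m i).
Proof. intros Hi. destruct pi_exists as [p [Hp Hpu]].
 apply is_lim_seq_Reals. intros eps Heps.
 assert (Hr: Rabs (1 - p ^ N) < 1).
 { assert (0 < p ^ N) by (apply pow_lt; lra). assert (p ^ N <= 1) by (apply pow_le_one; lra).
   rewrite Rabs_right; lra. }
 destruct (pow_lt_1_zero _ Hr eps Heps) as [Q HQ].
 exists (Q * N)%nat. intros k Hk. unfold R_dist.
 pose proof (Nat.div_mod k N ltac:(lia)) as Hd.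
 assert (Hq: (k / N >= Q)%nat).
 { apply Nat.div_le_lower_bound; lia. }
 pose proof (geom p Hp Hpu (k / N) (k mod N) i Hi) as G.
 replace (k / N * N + k mod N)%nat with k in G by lia.
 unfold err in G. rewrite Rabs_minus_sym.
 eapply Rle_lt_trans; [exact G|]. specialize (HQ (k / N)%nat Hq).
 rewrite Rabs_right in HQ; auto. apply Rle_ge, pow_le.
 assert (p ^ N <= 1) by (apply pow_le_one; lra). lra. Qed.

End Conv.

Theorem part1 (m : nat) (Hm : (1 < m)%nat) (N i : nat) : (1 <= N)%nat -> (i <= N)%nat ->
  absorb_prob N m m i = hh N m i.
Proof. intros HN Hi. unfold absorb_prob. rewrite (is_lim_seq_unique _ _ (reach_lim N m HN Hm i Hi)). reflexivity. Qed.

Lemma ln_le_sub1 y : 0 < y -> ln y <= y - 1.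
Proof. intros. pose proof (exp_ineq1_le (ln y)). rewrite exp_ln in H0 by auto. lra. Qed.

Lemma exp_pow_nat a j : exp a ^ j = exp (INR j * a).
Proof. induction j; simpl. - rewrite Rmult_0_l, exp_0. reflexivity.
 - rewrite IHj, <- exp_plus. f_equal. destruct j; simpl; ring. Qed.

Lemma pow_bound a b c j : 0 <= a -> a <= b * exp c -> 0 <= b -> a ^ j <= b ^ j * exp (INR j * c).
Proof. intros. rewrite <- exp_pow_nat, <- Rpow_mult_distr. apply pow_incr. lra. Qed.

Lemma step_a k : (1 <= k)%nat -> exp 1 * INR k ^ (S k) <= INR (S k) ^ (S k).
Proof. intros. assert (Hk: 0 < INR k) by (apply lt_0_INR; lia). rewrite S_INR.
 assert (INR k <= (INR k + 1) * exp (- / (INR k + 1))).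
 { pose proof (exp_ineq1_le (- / (INR k + 1))).
   apply Rle_trans with ((INR k + 1) * (1 + - / (INR k + 1))).
   - right. field. lra. - apply Rmult_le_compat_l; lra. }
 pose proof (pow_bound (INR k) (INR k + 1) (- / (INR k + 1)) (S k) ltac:(lra) H0 ltac:(lra)).
 replace (INR (S k) * - / (INR k + 1)) with (- (1)) in H1 by (rewrite S_INR; field; lra).
 rewrite exp_Ropp in H1. pose proof (exp_pos 1).
 apply Rmult_le_reg_r with (/ exp 1). apply Rinv_0_lt_compat; lra.
 rewrite Rmult_comm, <- Rmult_assoc, Rinv_l, Rmult_1_l by lra. exact H1. Qed.

Lemma step_b v : (1 <= v)%nat -> INR v ^ (v - 1) <= exp 1 * INR (v - 1) ^ (v - 1).
Proof. intros. destruct (Nat.eq_dec v 1). { subst. simpl. pose proof (exp_ineq1_le 1). lra. }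
 set (w := (v - 1)%nat). assert (Hv: INR v = INR w + 1) by (unfold w; rewrite minus_INR by lia; simpl; ring).
 assert (Hw: 0 < INR w) by (apply lt_0_INR; unfold w; lia).
 assert (INR v <= INR w * exp (/ INR w)).
 { pose proof (exp_ineq1_le (/ INR w)). apply Rle_trans with (INR w * (1 + / INR w)).
   - right. rewrite Hv. field. lra. - apply Rmult_le_compat_l; lra. }
 pose proof (pow_bound (INR v) (INR w) (/ INR w) w ltac:(rewrite Hv; lra) H0 ltac:(lra)).
 replace (INR w * / INR w) with 1 in H1 by (field; lra). lra. Qed.

Lemma step_ineq n k : (1 <= k)%nat -> (S k <= n)%nat ->
  INR k ^ (S k) * INR (n - k) ^ (n - k - 1) <= INR (S k) ^ (S k) * INR (n - S k) ^ (n - S k).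
Proof. intros. pose proof (step_a k H). pose proof (step_b (n - k) ltac:(lia)).
 replace (n - k - 1)%nat with (n - S k)%nat in * by lia.
 pose proof (exp_pos 1). assert (0 <= INR k ^ S k) by (apply pow_le, pos_INR).
 assert (0 <= INR (n - k) ^ (n - S k)) by (apply pow_le, pos_INR).
 assert (0 <= INR (n - S k) ^ (n - S k)) by (apply pow_le, pos_INR).
 apply Rmult_le_reg_l with (exp 1); auto.
 apply Rle_trans with (INR (S k) ^ S k * INR (n - k) ^ (n - S k)).
 - rewrite <- Rmult_assoc. apply Rmult_le_compat_r; auto.
 - apply Rle_trans with (INR (S k) ^ S k * (exp 1 * INR (n - S k) ^ (n - S k))).
   + apply Rmult_le_compat_l; auto. apply pow_le, pos_INR.
   + right; ring. Qed.

Definition EE n k := INR k ^ k * INR (n - k) ^ (n - k).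

Lemma selfpow_pos k : 0 < INR k ^ k.
Proof. destruct k. simpl; lra. apply pow_lt, lt_0_INR; lia. Qed.

Lemma EE_pos n k : 0 < EE n k.
Proof. unfold EE. apply Rmult_lt_0_compat; apply selfpow_pos. Qed.

Lemma tele n f k : (1 <= f)%nat -> (f <= k)%nat -> (k <= n)%nat ->
  INR f * EE n f * Cb n f <= INR k * EE n k * Cb n k.
Proof. intros Hf Hfk Hkn. induction Hfk; [lra|].
 eapply Rle_trans; [apply IHHfk; lia|].
 pose proof (C_ratio n m ltac:(lia)) as HC.
 assert (INR m * EE n m <= INR (n - m) * EE n (S m)).
 { unfold EE. pose proof (step_ineq n m ltac:(lia) ltac:(lia)) as H.
   replace (n - m - 1)%nat with (n - S m)%nat in H by lia.
   set (d := (n - S m)%nat) in *. replace (n - m)%nat with (S d) in * by (unfold d; lia).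
   replace (INR m * (INR m ^ m * INR (S d) ^ S d)) with (INR (S d) * (INR m ^ S m * INR (S d) ^ d)) by (simpl; ring).
   apply Rmult_le_compat_l; [apply pos_INR|exact H]. }
 assert (0 <= Cb n m) by (left; apply C_pos; lia).
 replace (INR (S m) * EE n (S m) * Cb n (S m)) with (EE n (S m) * (Cb n (S m) * INR (S m))) by ring.
 rewrite HC. replace (INR m * EE n m * Cb n m) with (Cb n m * (INR m * EE n m)) by ring.
 replace (EE n (S m) * (Cb n m * INR (n - m))) with (Cb n m * (INR (n - m) * EE n (S m))) by ring.
 apply Rmult_le_compat_l; auto. Qed.

Lemma sum_f_bound f n c : (forall j, (j <= n)%nat -> f j <= c) -> sum_f_R0 f n <= INR (S n) * c.
Proof. induction n; intros H; simpl. - specialize (H 0%nat ltac:(lia)). lra.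
 - pose proof (IHn ltac:(intros; apply H; lia)). pose proof (H (S n) ltac:(lia)).
   destruct n; simpl in *; lra. Qed.

Section MaxTerm.
Variables n k : nat.
Hypothesis Hk : (0 < k < n)%nat.
Definition TT j := Cb n j * INR k ^ j * INR (n - k) ^ (n - j).

Lemma TT_nonneg j : 0 <= TT j.
Proof. unfold TT. destruct (le_lt_dec j n).
 - apply Rmult_le_pos; [apply Rmult_le_pos|]; [left; apply C_pos; lia| apply pow_le, pos_INR | apply pow_le, pos_INR].
 - unfold Binomial.C. apply Rmult_le_pos; [apply Rmult_le_pos|]; [|apply pow_le, pos_INR | apply pow_le, pos_INR].
   apply Rmult_le_pos; [apply pos_INR|]. left; apply Rinv_0_lt_compat, Rmult_lt_0_compat; apply lt_0_INR, lt_O_fact. Qed.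

Lemma TT_rel j : (j < n)%nat -> TT (S j) * (INR (S j) * INR (n - k)) = TT j * (INR (n - j) * INR k).
Proof. intros. unfold TT. pose proof (C_ratio n j H).
 assert (Hd: (n - j)%nat = S (n - S j)) by lia. rewrite Hd in *. set (d := (n - S j)%nat) in *.
 transitivity ((Cb n (S j) * INR (S j)) * INR k ^ S j * INR (n - k) ^ (S d)); [simpl; ring|].
 rewrite H0. simpl. ring. Qed.

Lemma TT_up j : (j < k)%nat -> TT j <= TT (S j).
Proof. intros. pose proof (TT_rel j ltac:(lia)). pose proof (TT_nonneg j).
 assert (Hp: 0 < INR (S j) * INR (n - k)) by (apply Rmult_lt_0_compat; apply lt_0_INR; lia).
 assert (INR (S j) * INR (n - k) <= INR (n - j) * INR k).
 { rewrite <- !mult_INR. apply le_INR. nia. }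
 apply Rmult_le_reg_r with (INR (S j) * INR (n - k)); auto. rewrite H0.
 apply Rmult_le_compat_l; auto. Qed.

Lemma TT_down j : (k <= j)%nat -> (j < n)%nat -> TT (S j) <= TT j.
Proof. intros. pose proof (TT_rel j ltac:(lia)). pose proof (TT_nonneg j).
 assert (Hp: 0 < INR (S j) * INR (n - k)) by (apply Rmult_lt_0_compat; apply lt_0_INR; lia).
 assert (INR (n - j) * INR k <= INR (S j) * INR (n - k)).
 { rewrite <- !mult_INR. apply le_INR. nia. }
 apply Rmult_le_reg_r with (INR (S j) * INR (n - k)); auto. rewrite H1.
 apply Rmult_le_compat_l; auto. Qed.

Lemma TT_max j : (j <= n)%nat -> TT j <= TT k.
Proof. intros Hj. destruct (le_lt_dec j k).
 - assert (forall d, (d <= k)%nat -> TT (k - d) <= TT k).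
   { induction d; intros. rewrite Nat.sub_0_r; lra.
     eapply Rle_trans; [|apply IHd; lia]. replace (k - d)%nat with (S (k - S d)) by lia. apply TT_up. lia. }
   replace j with (k - (k - j))%nat by lia. apply H; lia.
 - assert (forall d, (k + d <= n)%nat -> TT (k + d) <= TT k).
   { induction d; intros. rewrite Nat.add_0_r; lra.
     eapply Rle_trans; [|apply IHd; lia]. replace (k + S d)%nat with (S (k + d)) by lia. apply TT_down; lia. }
   replace j with (k + (j - k))%nat by lia. apply H; lia. Qed.

Lemma max_term : INR n ^ n <= INR (S n) * (Cb n k * EE n k).
Proof. pose proof (binomial (INR k) (INR (n - k)) n) as B.
 replace (INR k + INR (n - k)) with (INR n) in B by (rewrite minus_INR by lia; ring).
 rewrite B. replace (Cb n k * EE n k) with (TT k) by (unfold TT, EE; ring).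
 apply sum_f_bound. intros j Hj. apply TT_max. auto. Qed.
End MaxTerm.

Lemma exp_le x y : x <= y -> exp x <= exp y.
Proof. intros [H|H]. left; apply exp_increasing; auto. subst; lra. Qed.

Lemma ln_div' x y : 0 < x -> 0 < y -> ln (x / y) = ln x - ln y.
Proof. intros. unfold Rdiv. rewrite ln_mult, ln_Rinv; auto. apply Rinv_0_lt_compat; auto. Qed.

Lemma ln_EE n k : (0 < k < n)%nat -> ln (EE n k) = INR k * ln (INR k) + INR (n - k) * ln (INR (n - k)).
Proof. intros. unfold EE. assert (0 < INR k) by (apply lt_0_INR; lia). assert (0 < INR (n - k)) by (apply lt_0_INR; lia).
 rewrite ln_mult by (apply pow_lt; auto). rewrite !ln_pow by auto. reflexivity. Qed.

Lemma gibbs_term a b : 0 < a -> 0 < b -> a * ln (b / a) <= b - a.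
Proof. intros. pose proof (ln_le_sub1 (b / a) ltac:(apply Rdiv_lt_0_compat; auto)).
 apply Rmult_le_compat_l with (r := a) in H1; [|lra]. replace (a * (b / a - 1)) with (b - a) in H1 by (field; lra). lra. Qed.

Section Ent.
Variable al : R.
Hypothesis Hal : 0 < al < 1.

Lemma ent_upper n f : (0 < f < n)%nat ->
  INR n * ln (INR n) + INR f * ln al + INR (n - f) * ln (1 - al) <= ln (EE n f).
Proof. intros H. rewrite ln_EE by auto.
 assert (Hf: 0 < INR f) by (apply lt_0_INR; lia). assert (Hnf: 0 < INR (n - f)) by (apply lt_0_INR; lia).
 assert (Hn: 0 < INR n) by (apply lt_0_INR; lia).
 pose proof (gibbs_term (INR f) (INR n * al) Hf ltac:(apply Rmult_lt_0_compat; lra)).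
 pose proof (gibbs_term (INR (n - f)) (INR n * (1 - al)) Hnf ltac:(apply Rmult_lt_0_compat; lra)).
 rewrite ln_div', ln_mult in H0 by (try apply Rmult_lt_0_compat; lra).
 rewrite ln_div', ln_mult in H1 by (try apply Rmult_lt_0_compat; lra).
 rewrite minus_INR in * by lia. nra. Qed.

Lemma ent_lower n k : (0 < k < n)%nat ->
  ln (EE n k) <= INR n * ln (INR n) - INR n * Hent al + (INR n * al - INR k) * (ln (INR (n - k)) - ln (INR k)).
Proof. intros H. rewrite ln_EE by auto. unfold Hent.
 assert (Hf: 0 < INR k) by (apply lt_0_INR; lia). assert (Hnf: 0 < INR (n - k)) by (apply lt_0_INR; lia).
 assert (Hn: 0 < INR n) by (apply lt_0_INR; lia).
 pose proof (gibbs_term (INR n * al) (INR k) ltac:(apply Rmult_lt_0_compat; lra) Hf).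
 pose proof (gibbs_term (INR n * (1 - al)) (INR (n - k)) ltac:(apply Rmult_lt_0_compat; lra) Hnf).
 rewrite ln_div', ln_mult in H0 by (try apply Rmult_lt_0_compat; lra).
 rewrite ln_div', ln_mult in H1 by (try apply Rmult_lt_0_compat; lra).
 rewrite minus_INR in * by lia. nra. Qed.

End Ent.

Lemma half_bound n h : (1 <= h)%nat -> (2 * h <= n <= 2 * h + 1)%nat ->
  ln (EE n h) <= INR n * ln (INR n) - INR n * ln 2 + 1.
Proof. intros H1 H2. rewrite ln_EE by lia.
 assert (Hf: 0 < INR h) by (apply lt_0_INR; lia). assert (Hnf: 0 < INR (n - h)) by (apply lt_0_INR; lia).
 assert (Hn: 0 < INR n) by (apply lt_0_INR; lia).
 pose proof (ln_le_sub1 (2 * INR h / INR n) ltac:(apply Rdiv_lt_0_compat; lra)) as A.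
 pose proof (ln_le_sub1 (2 * INR (n - h) / INR n) ltac:(apply Rdiv_lt_0_compat; lra)) as B.
 rewrite ln_div', ln_mult in A, B by lra.
 apply Rmult_le_compat_l with (r := INR h) in A; [|lra].
 apply Rmult_le_compat_l with (r := INR (n - h)) in B; [|lra].
 rewrite minus_INR in * by lia.
 assert (INR n <= 2 * INR h + 1 /\ 2 * INR h <= INR n).
 { split. replace (2 * INR h + 1) with (INR (2 * h + 1)) by (rewrite plus_INR, mult_INR; simpl; ring). apply le_INR; lia.
   replace (2 * INR h) with (INR (2 * h)) by (rewrite mult_INR; simpl; ring). apply le_INR; lia. }
 assert (Q: INR h * (2 * INR h / INR n - 1) + (INR n - INR h) * (2 * (INR n - INR h) / INR n - 1)
            = (2 * INR h - INR n) ^ 2 / INR n) by (field; lra).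
 assert ((2 * INR h - INR n) ^ 2 / INR n <= 1).
 { apply Rmult_le_reg_r with (INR n); auto. unfold Rdiv. rewrite Rmult_assoc, Rinv_l by lra.
   assert (1 <= INR n) by (replace 1 with (INR 1) by reflexivity; apply le_INR; lia). nra. }
 nra. Qed.

Lemma KL_nonneg al : 0 < al < 1 -> 0 <= KL_half al.
Proof. intros. unfold KL_half, Hent.
 pose proof (gibbs_term al (/ 2) ltac:(lra) ltac:(lra)).
 pose proof (gibbs_term (1 - al) (/ 2) ltac:(lra) ltac:(lra)).
 rewrite ln_div' in H0, H1 by lra. rewrite ln_Rinv in H0, H1 by lra. nra. Qed.

Lemma geom_sum (w : nat -> R) th f : 0 <= th < 1 -> (forall k, 0 <= w k) ->
  (forall K, (K < f)%nat -> w K <= th * w (S K)) -> sumR w (S f) <= w f / (1 - th).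
Proof. intros Ht Hw H.
 assert (forall K, (K <= f)%nat -> sumR w (S K) <= w K / (1 - th)).
 { induction K; intros HK.
   - simpl. pose proof (Hw 0%nat). apply Rmult_le_reg_r with (1 - th); [lra|].
     unfold Rdiv. rewrite Rmult_assoc, Rinv_l by lra. nra.
   - change (sumR w (S (S K))) with (sumR w (S K) + w (S K)).
     pose proof (IHK ltac:(lia)). pose proof (H K ltac:(lia)). pose proof (Hw (S K)).
     apply Rmult_le_reg_r with (1 - th); [lra|].
     unfold Rdiv in *. rewrite Rmult_assoc, Rinv_l by lra.
     apply Rmult_le_compat_r with (r := 1 - th) in H0; [|lra].
     rewrite Rmult_assoc, Rinv_l in H0 by lra. nra. }
 apply H0; lia. Qed.

Lemma sumR_f_R0 f n : sumR f (S n) = sum_f_R0 f n.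
Proof. induction n. simpl. ring. change (sumR f (S (S n))) with (sumR f (S n) + f (S n)). rewrite IHn. reflexivity. Qed.

Lemma binom_sum n : sumR (Cb n) (S n) = 2 ^ n.
Proof. rewrite sumR_f_R0. replace 2 with (1 + 1) by ring. rewrite binomial.
 apply sum_eq. intros. rewrite !pow1. ring. Qed.

Lemma power_sum (x : nat -> R) p K : (forall k, 0 <= x k) -> sumR (fun k => x k ^ S p) K <= (sumR x K) ^ S p.
Proof. intros Hx. set (S0 := sumR x K).
 assert (HS : 0 <= S0) by (apply sumR_nonneg; auto).
 apply Rle_trans with (sumR (fun k => x k * S0 ^ p) K).
 - apply sumR_le. intros k Hk. simpl. apply Rmult_le_compat_l; auto. apply pow_incr. split; auto.
   apply sumR_term; auto.
 - right. simpl. unfold S0. clear HS S0. generalize (sumR x K ^ p) as c. intros c. induction K; simpl; [ring|]. rewrite IHK. ring. Qed.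

Lemma fl_spec x : 0 <= x -> INR (Z.to_nat (Int_part x)) <= x < INR (Z.to_nat (Int_part x)) + 1.
Proof. intros H. destruct (base_Int_part x) as [A B].
 assert (Hz: (0 <= Int_part x)%Z). { apply le_IZR. assert (-1 < IZR (Int_part x)) by lra.
   apply lt_IZR in H0. apply IZR_le. lia. }
 rewrite INR_IZR_INZ, Z2Nat.id by auto. lra. Qed.

Definition fl N al := Z.to_nat (Int_part (INR N * al)).

Lemma hN_bounds N m al : (1 <= N)%nat -> (1 < m)%nat -> 0 <= al -> (S (fl N al) <= N)%nat ->
  hh N m (fl N al) <= hN N m m al <= hh N m (S (fl N al)).
Proof. intros HN Hm Hal Hf. unfold hN. cbv zeta. fold (fl N al).
 assert (0 <= INR N * al) by (apply Rmult_le_pos; auto; apply pos_INR).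
 pose proof (fl_spec _ H) as F. fold (fl N al) in F.
 pose proof (hh_mono N m (fl N al) (S (fl N al)) HN ltac:(lia)).
 destruct (Req_EM_T (INR N * al) (INR (fl N al))).
 - rewrite part1 by (auto; lia). lra.
 - rewrite !part1 by (auto; lia). rewrite S_INR. nra. Qed.

Section Main.
Variables (m : nat) (al : R).
Hypothesis Hm : (1 < m)%nat.
Hypothesis Hal : 0 < al < 1 / 2.

Definition th := al / (1 - al).
Definition LL := ln (1 - al) - ln al.
Definition KK0 := 1 + al * LL - ln al.
Definition cst1 := exp (INR (m - 1) * KK0) / (1 - th).

Lemma th_range : 0 <= th < 1.
Proof. unfold th. split. apply Rdiv_le_0_compat; lra.
 apply Rmult_lt_reg_r with (1 - al); [lra|]. unfold Rdiv. rewrite Rmult_assoc, Rinv_l; lra. Qed.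

Lemma LL_pos : 0 < LL.
Proof. unfold LL. pose proof (ln_increasing al (1 - al) ltac:(lra) ltac:(lra)). lra. Qed.

Lemma wt_ratio N f K : (1 <= N)%nat -> INR f <= INR N * al -> (K < f)%nat -> (f < N)%nat ->
  wt N m K <= th * wt N m (S K).
Proof. intros HN Hf HK HfN. unfold wt. set (n := (N - 1)%nat).
 pose proof (C_ratio n K ltac:(unfold n; lia)) as HC.
 assert (HnK: 0 < INR (n - K)) by (apply lt_0_INR; unfold n; lia).
 assert (Cb n K <= th * Cb n (S K)).
 { assert (E: Cb n K = Cb n (S K) * INR (S K) / INR (n - K)) by (rewrite HC; field; lra).
   rewrite E. pose proof (C_pos n (S K) ltac:(unfold n; lia)).
   assert (INR (S K) <= th * INR (n - K)).
   { unfold th. rewrite minus_INR by (unfold n; lia). unfold n. rewrite minus_INR by lia.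
     assert (INR (S K) <= INR f) by (apply le_INR; lia). rewrite S_INR in *.
     apply Rmult_le_reg_r with (1 - al); [lra|]. unfold Rdiv.
     replace (al * / (1 - al) * (INR N - INR 1 - INR K) * (1 - al)) with (al * (INR N - 1 - INR K)) by (simpl; field; lra).
     nra. }
   apply Rmult_le_reg_r with (INR (n - K)); auto. unfold Rdiv. rewrite Rmult_assoc, Rinv_l by lra. nra. }
 pose proof th_range. assert (0 <= Cb n K) by (left; apply C_pos; unfold n; lia).
 destruct m as [|p]; [lia|]. replace (S p - 1)%nat with p by lia. destruct p; [lia|].
 apply Rle_trans with ((th * Cb n (S K)) ^ S p).
 - apply pow_incr; lra.
 - rewrite Rpow_mult_distr. apply Rmult_le_compat_r; [apply pow_le; left; apply C_pos; unfold n; lia|].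
   simpl. assert (th ^ p <= 1) by (apply pow_le_one; lra). pose proof (pow_le th p ltac:(lra)). nra. Qed.

Lemma upper_large N : (1 <= N)%nat -> 2 <= al * INR N -> 1 <= INR N * (1 / 2 - al) ->
  hN N m m al <= cst1 * exp (- (INR N - 1) * (INR m - 1) * KL_half al).
Proof. intros HN H2 H3.
 set (f := fl N al). set (n := (N - 1)%nat). set (h := (n / 2)%nat).
 assert (F: INR f <= INR N * al < INR f + 1) by (apply fl_spec; apply Rmult_le_pos; [apply pos_INR|lra]).
 assert (Hn: INR n = INR N - 1) by (unfold n; rewrite minus_INR by lia; reflexivity).
 assert (Hh: (2 * h <= n <= 2 * h + 1)%nat) by (unfold h; pose proof (Nat.div_mod n 2); pose proof (Nat.mod_upper_bound n 2); lia).
 assert (Hh': INR n <= 2 * INR h + 1) by (replace (2 * INR h + 1) with (INR (2 * h + 1)) by (rewrite plus_INR, mult_INR; simpl; ring); apply le_INR; lia).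
 assert (Hh'': 2 * INR h <= INR n) by (replace (2 * INR h) with (INR (2 * h)) by (rewrite mult_INR; simpl; ring); apply le_INR; lia).
 assert (Hf1: (1 < f)%nat) by (apply INR_lt; simpl; lra).
 assert (Hfh: (f <= h)%nat) by (apply INR_le; lra).
 assert (HfN: (S f <= N)%nat) by lia.
 assert (HfR: 0 < INR f) by (apply lt_0_INR; lia).
 assert (HhR: 0 < INR h) by (apply lt_0_INR; lia).
 pose proof (hN_bounds N m al HN Hm ltac:(lra) HfN) as [_ B1]. fold f in B1.
 eapply Rle_trans; [exact B1|]. clear B1.
 pose proof th_range as Th.
 assert (G: SS N m (S f) <= wt N m f / (1 - th)).
 { apply geom_sum; auto. apply wt_nonneg. intros K HK. apply (wt_ratio N f K HN); [lra|lia|lia]. }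
 assert (W: wt N m h <= SS N m N) by (apply sumR_term; [apply wt_nonneg| lia]).
 assert (Wh: 0 < wt N m h) by (apply wt_pos; lia).
 assert (Wf: 0 < wt N m f) by (apply wt_pos; lia).
 assert (S1: hh N m (S f) <= (wt N m f / wt N m h) / (1 - th)).
 { unfold hh. apply Rle_trans with ((wt N m f / (1 - th)) / wt N m h).
   - unfold Rdiv. apply Rmult_le_compat; try lra.
     + apply sumR_nonneg; intros; apply wt_nonneg.
     + left; apply Rinv_0_lt_compat; apply SS_pos; auto.
     + apply Rinv_le_contravar; auto.
   - right. field. split; lra. }
 eapply Rle_trans; [exact S1|]. clear S1 G W.
 set (R := INR h * EE n h / (INR f * EE n f)).
 assert (Cf: Cb n f <= R * Cb n h).
 { pose proof (tele n f h ltac:(lia) Hfh ltac:(lia)). pose proof (EE_pos n f). unfold R.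
   apply Rmult_le_reg_l with (INR f * EE n f). apply Rmult_lt_0_compat; auto.
   replace (INR f * EE n f * (INR h * EE n h / (INR f * EE n f) * Cb n h)) with (INR h * EE n h * Cb n h)
     by (field; split; lra). exact H. }
 assert (Rpos: 0 < R) by (unfold R; pose proof (EE_pos n f); pose proof (EE_pos n h); apply Rdiv_lt_0_compat; apply Rmult_lt_0_compat; auto).
 assert (lnR: ln R <= KK0 - INR n * KL_half al).
 { pose proof (EE_pos n f). pose proof (EE_pos n h). unfold R.
   rewrite ln_div' by (apply Rmult_lt_0_compat; auto).
   rewrite (ln_mult (INR h) (EE n h)), (ln_mult (INR f) (EE n f)) by auto.
   pose proof (half_bound n h ltac:(lia) Hh) as HB.
   pose proof (ent_upper al ltac:(lra) n f ltac:(lia)) as EU.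
   assert (LA: ln al + ln (INR h) <= ln (INR f)).
   { rewrite <- ln_mult by lra. apply ln_le. apply Rmult_lt_0_compat; lra. nra. }
   assert (LB: (INR f - INR n * al) * LL <= al * LL) by (apply Rmult_le_compat_r; [left; apply LL_pos| nra]).
   unfold KK0, KL_half, Hent. unfold LL in *. rewrite minus_INR in EU by lia. nra. }
 assert (Rb: R <= exp (KK0 - INR n * KL_half al)) by (rewrite <- (exp_ln R) by auto; apply exp_le; auto).
 set (X := exp (KK0 - INR n * KL_half al)) in *.
 assert (Q: wt N m f <= X ^ (m - 1) * wt N m h).
 { unfold wt. fold n. rewrite <- Rpow_mult_distr. apply pow_incr. split.
   - left; apply C_pos; lia.
   - pose proof (C_pos n h ltac:(lia)). nra. }
 assert (Q2: wt N m f / wt N m h / (1 - th) <= X ^ (m - 1) / (1 - th)).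
 { unfold Rdiv. apply Rmult_le_compat_r. left; apply Rinv_0_lt_compat; lra.
   apply Rmult_le_reg_r with (wt N m h); auto. rewrite Rmult_assoc, Rinv_l by lra. lra. }
 eapply Rle_trans; [exact Q2|]. right. unfold X, cst1. rewrite exp_pow_nat.
 rewrite minus_INR by lia. rewrite Hn. simpl (INR 1).
 unfold Rdiv. rewrite Rmult_comm, Rmult_assoc. rewrite <- Rmult_assoc, (Rmult_comm _ (/ (1 - th))), Rmult_assoc, <- exp_plus. f_equal. f_equal. ring.
Qed.

Definition KK1 := 2 * (ln 2 - ln al).

Lemma SS_upper N : (1 <= N)%nat -> SS N m N <= (2 ^ (N - 1)) ^ (m - 1).
Proof. intros HN. unfold SS, wt. set (n := (N - 1)%nat). replace N with (S n) at 1 by (unfold n; lia).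
 destruct m as [|p]; [lia|]. replace (S p - 1)%nat with p by lia. destruct p; [lia|].
 rewrite <- binom_sum. apply power_sum. intros k. destruct (le_lt_dec k n).
 - left; apply C_pos; auto.
 - unfold Binomial.C. apply Rmult_le_pos; [apply pos_INR|]. left. apply Rinv_0_lt_compat.
   apply Rmult_lt_0_compat; apply lt_0_INR, lt_O_fact. Qed.

Lemma lower_large N : (1 <= N)%nat -> 4 <= al * INR N -> 1 <= INR N * (1 / 2 - al) ->
  0 < hN N m m al /\ INR (m - 1) * (- ln (INR N) - (INR N - 1) * KL_half al - KK1) <= ln (hN N m m al).
Proof. intros HN H2 H3.
 set (f := fl N al). set (n := (N - 1)%nat). set (k := (f - 1)%nat).
 assert (F: INR f <= INR N * al < INR f + 1) by (apply fl_spec; apply Rmult_le_pos; [apply pos_INR|lra]).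
 assert (Hn: INR n = INR N - 1) by (unfold n; rewrite minus_INR by lia; reflexivity).
 assert (Hf1: (3 < f)%nat) by (apply INR_lt; simpl; lra).
 assert (Hk: INR k = INR f - 1) by (unfold k; rewrite minus_INR by lia; reflexivity).
 assert (HfN: (S f <= N)%nat) by (apply INR_le; rewrite S_INR; nra).
 assert (Hkn: (0 < k < n)%nat) by (unfold k, n; lia).
 assert (HkR: 0 < INR k) by (apply lt_0_INR; lia).
 assert (HnR: 0 < INR n) by (apply lt_0_INR; lia).
 assert (HnkR: 0 < INR (n - k)) by (apply lt_0_INR; lia).
 pose proof (hN_bounds N m al HN Hm ltac:(lra) HfN) as [B1 _]. fold f in B1.
 set (B := INR n ^ n / (INR (S n) * EE n k * 2 ^ n)).
 assert (Bpos: 0 < B) by (unfold B; pose proof (EE_pos n k); apply Rdiv_lt_0_compat; [apply pow_lt; auto|];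
   apply Rmult_lt_0_compat; [apply Rmult_lt_0_compat; [apply lt_0_INR; lia| auto]| apply pow_lt; lra]).
 assert (HB: B ^ (m - 1) <= hh N m f).
 { pose proof (max_term n k Hkn) as MT. pose proof (EE_pos n k).
   assert (C1: INR n ^ n / (INR (S n) * EE n k) <= Cb n k).
   { apply Rmult_le_reg_r with (INR (S n) * EE n k). apply Rmult_lt_0_compat; [apply lt_0_INR; lia|auto].
     unfold Rdiv. rewrite Rmult_assoc, Rinv_l by (apply Rgt_not_eq, Rmult_lt_0_compat; [apply lt_0_INR; lia|auto]). lra. }
   assert (W: B ^ (m - 1) * (2 ^ n) ^ (m - 1) <= wt N m k).
   { unfold wt. fold n. rewrite <- Rpow_mult_distr. apply pow_incr. split.
     - apply Rmult_le_pos; [lra| apply pow_le; lra].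
     - unfold B. replace (INR n ^ n / (INR (S n) * EE n k * 2 ^ n) * 2 ^ n) with (INR n ^ n / (INR (S n) * EE n k)); auto.
       field. split; [apply Rgt_not_eq, pow_lt; lra|]. split; [lra|]. apply not_0_INR; lia. }
   pose proof (SS_upper N HN) as SU. fold n in SU.
   assert (Wk: wt N m k <= SS N m f) by (apply sumR_term; [apply wt_nonneg| unfold k; lia]).
   pose proof (SS_pos N m HN).
   assert (P2: 0 < (2 ^ n) ^ (m - 1)) by (apply pow_lt, pow_lt; lra).
   unfold hh. apply Rmult_le_reg_r with (SS N m N); auto. unfold Rdiv. rewrite Rmult_assoc, Rinv_l by lra.
   rewrite Rmult_1_r. apply Rle_trans with (B ^ (m - 1) * (2 ^ n) ^ (m - 1)); [|lra].
   apply Rmult_le_compat_l; [apply pow_le; lra| auto]. }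
 assert (Hpos: 0 < hN N m m al) by (pose proof (pow_lt B (m - 1) Bpos); lra).
 split; [exact Hpos|].
 apply Rle_trans with (ln (B ^ (m - 1))); [|apply ln_le; [apply pow_lt; auto| lra]].
 rewrite ln_pow by auto. apply Rmult_le_compat_l; [apply pos_INR|].
 pose proof (EE_pos n k).
 assert (P1: 0 < INR (S n)) by (apply lt_0_INR; lia).
 assert (P3: 0 < 2 ^ n) by (apply pow_lt; lra).
 assert (P4: 0 < INR (S n) * EE n k) by (apply Rmult_lt_0_compat; auto).
 assert (P5: 0 < INR (S n) * EE n k * 2 ^ n) by (apply Rmult_lt_0_compat; auto).
 assert (P6: 0 < INR n ^ n) by (apply pow_lt; auto).
 unfold B. rewrite ln_div' by auto.
 rewrite ln_pow by auto.
 rewrite (ln_mult (INR (S n) * EE n k) (2 ^ n)) by auto.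
 rewrite (ln_mult (INR (S n)) (EE n k)) by auto.
 rewrite ln_pow by lra.
 pose proof (ent_lower al ltac:(lra) n k Hkn) as EL.
 assert (AB: (INR n * al - INR k) * (ln (INR (n - k)) - ln (INR k)) <= KK1).
 { assert (A0: 0 <= INR n * al - INR k) by nra. assert (A2: INR n * al - INR k <= 2) by nra.
   assert (B0: 0 <= ln (INR (n - k)) - ln (INR k)).
   { assert (ln (INR k) <= ln (INR (n - k))); [|lra]. apply ln_le; auto. rewrite minus_INR by lia. nra. }
   assert (B2: ln (INR (n - k)) - ln (INR k) <= ln 2 - ln al).
   { assert (ln (INR (n - k)) <= ln (INR n)) by (apply ln_le; auto; apply le_INR; lia).
     assert (ln (al * INR n) <= ln (2 * INR k)) by (apply ln_le; [apply Rmult_lt_0_compat; lra| nra]).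
     rewrite !ln_mult in H1 by lra. lra. }
   unfold KK1. apply Rle_trans with (2 * (ln (INR (n - k)) - ln (INR k))).
   - apply Rmult_le_compat_r; auto.
   - lra. }
 replace (INR (S n)) with (INR N) by (f_equal; unfold n; lia).
 unfold KL_half. rewrite <- Hn. lra.
Qed.
End Main.

Lemma nat_above x : exists n : nat, x <= INR n.
Proof. destruct (INR_archimed 1 x ltac:(lra)) as [n Hn]. exists n. lra. Qed.

Lemma lim_invN a : is_lim_seq (fun N => a * / INR N) 0.
Proof. replace (Finite 0) with (Rbar_mult a 0) by (simpl; f_equal; ring).
 apply is_lim_seq_scal_l. replace (Finite 0) with (Rbar_inv p_infty) by reflexivity.
 apply is_lim_seq_inv. apply is_lim_seq_INR. discriminate. Qed.

Lemma lim_lnN a : is_lim_seq (fun N => a * (ln (INR N) / INR N)) 0.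
Proof. replace (Finite 0) with (Rbar_mult a 0) by (simpl; f_equal; ring).
 apply is_lim_seq_scal_l.
 apply (is_lim_comp_seq (fun y => ln y / y) INR p_infty 0).
 - apply is_lim_div_ln_p.
 - exists 0%nat. intros. discriminate.
 - apply is_lim_seq_INR. Qed.

Lemma part2 m al : (1 < m)%nat -> 0 < al < 1 / 2 ->
     (exists c : R, 0 < c /\
        forall N : nat, (1 <= N)%nat ->
          hN N m m al <=
          c * exp (- (INR N - 1) * (INR m - 1) * KL_half al))
     /\
     is_lim_seq (fun N : nat => / INR N * ln (hN N m m al))
                (- (INR m - 1) * KL_half al).
Proof. intros Hm Hal.
 pose proof (KL_nonneg al ltac:(lra)) as KLp.
 assert (Hm1: INR (m - 1) = INR m - 1) by (rewrite minus_INR by lia; reflexivity).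
 assert (Hm1p: 0 <= INR m - 1) by (rewrite <- Hm1; apply pos_INR).
 assert (c1pos: 0 < cst1 m al).
 { unfold cst1. pose proof (th_range al Hal). apply Rdiv_lt_0_compat; [apply exp_pos| lra]. }
 destruct (nat_above (Rmax 1 (Rmax (4 / al) (1 / (1 / 2 - al))))) as [N0 HN0].
 assert (HA: 1 <= INR N0 /\ 4 / al <= INR N0 /\ 1 / (1 / 2 - al) <= INR N0).
 { pose proof (Rmax_l 1 (Rmax (4 / al) (1 / (1 / 2 - al)))). pose proof (Rmax_r 1 (Rmax (4 / al) (1 / (1 / 2 - al)))).
   pose proof (Rmax_l (4 / al) (1 / (1 / 2 - al))). pose proof (Rmax_r (4 / al) (1 / (1 / 2 - al))). lra. }
 assert (Big: forall N, (N0 <= N)%nat -> (1 <= N)%nat /\ 4 <= al * INR N /\ 1 <= INR N * (1 / 2 - al)).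
 { intros N HN. apply le_INR in HN. destruct HA as [A1 [A2 A3]]. split; [apply INR_le; simpl; lra|]. split.
   - apply Rmult_le_reg_r with (/ al). apply Rinv_0_lt_compat; lra.
     replace (al * INR N * / al) with (INR N) by (field; lra). unfold Rdiv in A2. lra.
   - apply Rmult_le_reg_r with (/ (1 / 2 - al)). apply Rinv_0_lt_compat; lra.
     replace (INR N * (1 / 2 - al) * / (1 / 2 - al)) with (INR N) by (field; lra). unfold Rdiv in A3. lra. }
 split.
 - set (c := Rmax (cst1 m al) (exp (INR N0 * (INR m - 1) * KL_half al))).
   exists c. split. { eapply Rlt_le_trans; [exact c1pos| apply Rmax_l]. }
   intros N HN. destruct (le_lt_dec N0 N) as [HNN|HNN].
   + destruct (Big N HNN) as [B1 [B2 B3]].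
     eapply Rle_trans; [apply upper_large; auto; lra|].
     apply Rmult_le_compat_r; [left; apply exp_pos| apply Rmax_l].
   + set (f := fl N al).
     assert (F: INR f <= INR N * al < INR f + 1) by (apply fl_spec; apply Rmult_le_pos; [apply pos_INR|lra]).
     assert (HNR: 1 <= INR N) by (apply (le_INR 1); lia).
     assert (HfN: (S f <= N)%nat) by (apply INR_lt; nra).
     pose proof (hN_bounds N m al HN Hm ltac:(lra) HfN) as [_ B1]. fold f in B1.
     pose proof (hh_range N m (S f) HN HfN).
     apply Rle_trans with 1; [lra|].
     apply Rle_trans with (exp (INR N0 * (INR m - 1) * KL_half al) * exp (- (INR N - 1) * (INR m - 1) * KL_half al)).
     * rewrite <- exp_plus. rewrite <- exp_0 at 1. apply exp_le.
       assert (INR N <= INR N0) by (apply le_INR; lia).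
       assert (0 <= (INR N0 - INR N + 1) * ((INR m - 1) * KL_half al)) by (apply Rmult_le_pos; [lra| apply Rmult_le_pos; lra]).
       nra.
     * apply Rmult_le_compat_r; [left; apply exp_pos| apply Rmax_r].
 - set (A := - (INR m - 1) * KL_half al).
   set (lo := fun N => A + (INR m - 1) * (KL_half al - KK1 al) * / INR N + (- (INR m - 1)) * (ln (INR N) / INR N)).
   set (hi := fun N => A + (ln (cst1 m al) + (INR m - 1) * KL_half al) * / INR N).
   apply (is_lim_seq_le_le_loc lo _ hi).
   + exists N0. intros N HNN. destruct (Big N HNN) as [B1 [B2 B3]].
     assert (HNR: 0 < INR N) by (apply lt_0_INR; lia).
     pose proof (lower_large m al Hm Hal N B1 B2 B3) as [Hp Hlow].
     pose proof (upper_large m al Hm Hal N B1 ltac:(lra) B3) as Hup.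
     assert (Hup': ln (hN N m m al) <= ln (cst1 m al) + - (INR N - 1) * (INR m - 1) * KL_half al).
     { rewrite <- (ln_exp (- (INR N - 1) * (INR m - 1) * KL_half al)). rewrite <- ln_mult by (auto; apply exp_pos).
       apply ln_le; auto. }
     rewrite Hm1 in Hlow.
     assert (Hi: 0 < / INR N) by (apply Rinv_0_lt_compat; auto).
     split.
     * unfold lo, A. apply Rmult_le_compat_l with (r := / INR N) in Hlow; [|lra].
       eapply Rle_trans; [|exact Hlow]. right. field. lra.
     * unfold hi, A. apply Rmult_le_compat_l with (r := / INR N) in Hup'; [|lra].
       eapply Rle_trans; [exact Hup'|]. right. field. lra.
   + replace (Finite A) with (Finite (A + 0 + 0)) by (f_equal; ring).
     unfold lo. apply is_lim_seq_plus'; [apply is_lim_seq_plus'; [apply is_lim_seq_const| apply lim_invN]| apply lim_lnN].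
   + replace (Finite A) with (Finite (A + 0)) by (f_equal; ring).
     unfold hi. apply is_lim_seq_plus'; [apply is_lim_seq_const| apply lim_invN].
Qed.

Theorem theorem1 (m : nat) (Hm : (1 < m)%nat) :
  (forall N i : nat, (1 <= N)%nat -> (i <= N)%nat ->
     absorb_prob N m m i =
     sumR (fun k => Binomial.C (N - 1) k ^ (m - 1)) i /
     sumR (fun k => Binomial.C (N - 1) k ^ (m - 1)) N)
  /\
  (forall alpha : R, 0 < alpha < 1 / 2 ->
     (exists c : R, 0 < c /\
        forall N : nat, (1 <= N)%nat ->
          hN N m m alpha <=
          c * exp (- (INR N - 1) * (INR m - 1) * KL_half alpha))
     /\
     is_lim_seq (fun N : nat => / INR N * ln (hN N m m alpha))
                (- (INR m - 1) * KL_half alpha)).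
Proof. split.
 - intros N i HN Hi. rewrite part1 by auto. reflexivity.
 - intros al Hal. apply part2; auto.
Qed.
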